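(* Let $\|f^{(\beta_* )}\|<\infty$ for some $\beta_*>1$, $\hat\beta_*=\beta_*\wedge1.5$, $\varepsilon\in(0,1)$ with $N_\varepsilon=\lfloor(\varepsilon^2\log\varepsilon^{-5})^{-1/(2\beta_*+1)}\rfloor\ge1$, and let $h\in[0,1]^{N_\varepsilon}$ (possibly random). Let $\hat X=\max_{1\le k\le N_\varepsilon}\sqrt{\xi_k(\vartheta)^2+\xi_k^*(\vartheta)^2}$. Then, almost surely, for all $\tau$ with $4\pi|\tau-\vartheta|\le N_\varepsilon^{-1}$, $$\Big|\Phi_\varepsilon''(\tau,h)+\sum_{k=1}^{N_\varepsilon}(2\pi k)^2h_kf_k^2\Big|\le N_\varepsilon^{2-2\hat\beta_*}\Big(\|f^{(\beta_* )}\|+\frac{2\pi\hat X}{\sqrt{\log\varepsilon^{-5}}}\Big)^2.$$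
   Context: Model: $\vartheta\in\mathbb R$, $f$ locally square integrable, even, $1$-periodic; $f_k=\sqrt2\int_{-1/2}^{1/2}\cos(2\pi kt)f(t)dt$, $\|f^{(\beta)}\|^2=\sum_{k\ge1}(2\pi k)^{2\beta}f_k^2$. Observations $x_k=f_k\cos(2\pi k\vartheta)+\varepsilon\xi_k$, $x_k^*=f_k\sin(2\pi k\vartheta)+\varepsilon\xi_k^*$, $\xi_k,\xi_k^*$ i.i.d. $\mathcal N(0,1)$. Define $\xi_k(\vartheta)=\xi_k\cos(2\pi k\vartheta)+\xi_k^*\sin(2\pi k\vartheta)$, $\xi^*_k(\vartheta)=\xi_k^*\cos(2\pi k\vartheta)-\xi_k\sin(2\pi k\vartheta)$ (so that $x_k\cos(2\pi k\vartheta)+x_k^*\sin(2\pi k\vartheta)=f_k+\varepsilon\xi_k(\vartheta)$ and $x_k^*\cos(2\pi k\vartheta)-x_k\sin(2\pi k\vartheta)=\varepsilon\xi_k^*(\vartheta)$). $h\in[0,1]^N$ extended by $0$; $\Phi_\varepsilon(\tau,h)=\frac12\sum_kh_k(x_k\cos(2\pi k\tau)+x_k^*\sin(2\pi k\tau))^2$, $\Phi''_\varepsilon$ its second derivative in $\tau$. *)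

(* Defs.v *)
From HB Require Import structures.
From mathcomp Require Import all_boot all_order all_algebra.
From mathcomp Require Import all_classical all_reals all_analysis.
Set Implicit Arguments. Unset Strict Implicit. Unset Printing Implicit Defensive.
Import Order.TTheory GRing.Theory Num.Theory.
Import numFieldNormedType.Exports.
Local Open Scope classical_set_scope.
Local Open Scope ring_scope.

Section Model.
Variable R : realType.

Definition fcoef (f : R -> R) (k : nat) : R :=
  Num.sqrt 2 * \int[@lebesgue_measure R]_(t in `[(-(1/2)), (1/2)]) (cos (2 * pi * k%:R * t) * f t).

Definition sobnorm2 (f : R -> R) (beta : R) : \bar R :=
  (\sum_(1 <= k <oo) ((2 * pi * k%:R) `^ (2 * beta) * fcoef f k ^+ 2)%:E)%E.

Definition sobnorm (f : R -> R) (beta : R) : R := Num.sqrt (fine (sobnorm2 f beta)).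

Definition admissible_f (f : R -> R) : Prop :=
  measurable_fun setT f /\
  (forall a b : R, (@lebesgue_measure R).-integrable `[a, b] (fun t => ((f t) ^+ 2)%:E)) /\
  (forall t, f (- t) = f t) /\
  (forall t, f (t + 1) = f t).

Definition obs_x (f : R -> R) (theta eps : R) (xi : nat -> R) (k : nat) : R :=
  fcoef f k * cos (2 * pi * k%:R * theta) + eps * xi k.
Definition obs_xs (f : R -> R) (theta eps : R) (xis : nat -> R) (k : nat) : R :=
  fcoef f k * sin (2 * pi * k%:R * theta) + eps * xis k.

Definition xi_th (xi xis : nat -> R) (theta : R) (k : nat) : R :=
  xi k * cos (2 * pi * k%:R * theta) + xis k * sin (2 * pi * k%:R * theta).
Definition xis_th (xi xis : nat -> R) (theta : R) (k : nat) : R :=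
  xis k * cos (2 * pi * k%:R * theta) - xi k * sin (2 * pi * k%:R * theta).

(* Phi_eps(tau, h) with h supported on {1..N} (extended by 0) *)
Definition Phi (N : nat) (x xs : nat -> R) (h : nat -> R) (tau : R) : R :=
  2^-1 * \sum_(1 <= k < N.+1)
     h k * (x k * cos (2 * pi * k%:R * tau) + xs k * sin (2 * pi * k%:R * tau)) ^+ 2.

Definition Phi'' (N : nat) (x xs : nat -> R) (h : nat -> R) (tau : R) : R :=
  derive1 (derive1 (Phi N x xs h)) tau.

Definition Xhat (N : nat) (xi xis : nat -> R) (theta : R) : R :=
  \big[Num.max/0]_(1 <= k < N.+1)
     Num.sqrt (xi_th xi xis theta k ^+ 2 + xis_th xi xis theta k ^+ 2).

End Model.

(* Main.v *)
Require Import Defs.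
From HB Require Import structures.
From mathcomp Require Import all_boot all_order all_algebra.
From mathcomp Require Import all_classical all_reals all_analysis.
From mathcomp Require Import ring lra.
Import Order.TTheory GRing.Theory Num.Theory.
Import numFieldNormedType.Exports.
Local Open Scope classical_set_scope.
Local Open Scope ring_scope.

Section S.
Variable R : realType.


Definition gg (X Y w t : R) : R := X * cos (w * t) + Y * sin (w * t).

Lemma is_derive_lin (w t : R) : is_derive t 1 (fun s : R => w * s) w.
Proof.
have H : is_derive t 1 (fun s : R => w * s) (w *: 1) := is_deriveZ w (is_derive_id t 1).
by rewrite -[X in is_derive _ _ _ X]mulr1.
Qed.

Lemma is_derive_gg (X Y w t : R) : is_derive t 1 (gg X Y w) (gg (w * Y) (- (w * X)) w t).
Proof.
have hc : is_derive t 1 (fun s => cos (w * s)) (- sin (w * t) * w).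
  exact: (@is_derive1_comp R cos (fun s => w * s) t _ _ (is_derive_cos _) (is_derive_lin w t)).
have hs : is_derive t 1 (fun s => sin (w * s)) (cos (w * t) * w).
  exact: (@is_derive1_comp R sin (fun s => w * s) t _ _ (is_derive_sin _) (is_derive_lin w t)).
have H : is_derive t 1 (gg X Y w) (X *: (- sin (w * t) * w) + Y *: (cos (w * t) * w))
  := is_deriveD (is_deriveZ X hc) (is_deriveZ Y hs).
apply: (is_derive_eq H).
rewrite /gg /GRing.scale /=; ring.
Qed.

Lemma is_derive_sumn (F : nat -> R -> R) (dF : nat -> R) (t : R) m n :
  (forall k, is_derive t 1 (F k) (dF k)) ->
  is_derive t 1 (fun s => \sum_(m <= k < n) F k s) (\sum_(m <= k < n) dF k).
Proof.
move=> H; elim: n => [|n IH].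
  under eq_fun do rewrite big_geq //. rewrite big_geq //; exact: is_derive_cst.
case: (leqP m n) => hmn.
  under eq_fun do rewrite big_nat_recr //. rewrite big_nat_recr //.
  exact: (is_deriveD IH (H n)).
under eq_fun do rewrite big_geq //. rewrite big_geq //; exact: is_derive_cst.
Qed.

Lemma is_derive_mulgg (X Y X' Y' w t : R) :
  is_derive t 1 (fun s => gg X Y w s * gg X' Y' w s)
    (gg X Y w t * gg (w * Y') (- (w * X')) w t + gg X' Y' w t * gg (w * Y) (- (w * X)) w t).
Proof.
have H : is_derive t 1 (fun s => gg X Y w s * gg X' Y' w s)
    (gg X Y w t *: gg (w * Y') (- (w * X')) w t + gg X' Y' w t *: gg (w * Y) (- (w * X)) w t)
  := is_deriveM (is_derive_gg X Y w t) (is_derive_gg X' Y' w t).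
exact: H.
Qed.

Lemma derive1_is (f : R -> R) (df x : R) : is_derive x 1 f df -> derive1 f x = df.
Proof. by move=> H; rewrite derive1E; exact: derive_val. Qed.

Definition w_ (k : nat) : R := 2 * pi * k%:R.

Lemma Phi''E N (x xs h : nat -> R) tau :
  Phi'' N x xs h tau = \sum_(1 <= k < N.+1) h k *
    (gg (w_ k * xs k) (- (w_ k * x k)) (w_ k) tau ^+ 2 +
     gg (x k) (xs k) (w_ k) tau *
     gg (w_ k * (- (w_ k * x k))) (- (w_ k * (w_ k * xs k))) (w_ k) tau).
Proof.
set d1 := fun t => \sum_(1 <= k < N.+1) h k *
  (gg (x k) (xs k) (w_ k) t * gg (w_ k * xs k) (- (w_ k * x k)) (w_ k) t).
have D1 : derive1 (Phi N x xs h) = d1.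
  apply/funext => t; apply: derive1_is.
  have Hk : forall k, is_derive t 1 (fun s => h k * (gg (x k) (xs k) (w_ k) s ^+ 2))
     (h k * (gg (x k) (xs k) (w_ k) t * gg (w_ k * xs k) (- (w_ k * x k)) (w_ k) t +
      gg (x k) (xs k) (w_ k) t * gg (w_ k * xs k) (- (w_ k * x k)) (w_ k) t))
    := fun k => is_deriveZ (h k) (is_derive_mulgg (x k) (xs k) (x k) (xs k) (w_ k) t).
  have H : is_derive t 1 (Phi N x xs h) (2^-1 * \sum_(1 <= k < N.+1)
     (h k * (gg (x k) (xs k) (w_ k) t * gg (w_ k * xs k) (- (w_ k * x k)) (w_ k) t +
      gg (x k) (xs k) (w_ k) t * gg (w_ k * xs k) (- (w_ k * x k)) (w_ k) t)))
    := is_deriveZ (2^-1) (is_derive_sumn _ _ t 1 N.+1 Hk).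
  apply: (is_derive_eq H).
  rewrite /d1 mulr_sumr; apply: eq_bigr => k _.
  by field.
rewrite /Phi'' D1; apply: derive1_is.
apply: (is_derive_sumn (fun k s => h k * (gg (x k) (xs k) (w_ k) s * gg (w_ k * xs k) (- (w_ k * x k)) (w_ k) s))) => k.
have H : is_derive tau 1 (fun s => h k * (gg (x k) (xs k) (w_ k) s * gg (w_ k * xs k) (- (w_ k * x k)) (w_ k) s)) _
  := is_deriveZ (h k) (is_derive_mulgg (x k) (xs k) (w_ k * xs k) (- (w_ k * x k)) (w_ k) tau).
apply: (is_derive_eq H).
rewrite /GRing.scale /= /gg; ring.
Qed.



Lemma abs_le_sq (z r : R) : 0 <= r -> z ^+ 2 <= r ^+ 2 -> `|z| <= r.
Proof.
move=> r0 h; rewrite -(ger0_norm r0); rewrite -ler_sqr ?nnegrE //.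
by rewrite !real_normK ?num_real.
Qed.

Lemma key_k (f eps xi xis hk w cT sT cH sH : R) :
  cT ^+ 2 + sT ^+ 2 = 1 -> cH ^+ 2 + sH ^+ 2 = 1 ->
  0 <= hk <= 1 -> 0 <= eps ->
  let x := f * cH + eps * xi in
  let xs := f * sH + eps * xis in
  let g0 := x * cT + xs * sT in
  let g1 := (w * xs) * cT + (- (w * x)) * sT in
  let g2 := (w * (- (w * x))) * cT + (- (w * (w * xs))) * sT in
  let rho := (xi * cH + xis * sH) ^+ 2 + (xis * cH - xi * sH) ^+ 2 in
  `| hk * (g1 ^+ 2 + g0 * g2) + w ^+ 2 * hk * f ^+ 2 |
   <= w ^+ 2 * (2 * f ^+ 2 * (sT * cH - cT * sH) ^+ 2
               + 2 * eps * `|f| * Num.sqrt rho + eps ^+ 2 * rho).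
Proof.
move=> eT eH /andP[h0 h1] e0; cbv zeta.
set x := f * cH + eps * xi.
set xs := f * sH + eps * xis.
set g0 := x * cT + xs * sT.
set g1 := (w * xs) * cT + (- (w * x)) * sT.
set g2 := (w * (- (w * x))) * cT + (- (w * (w * xs))) * sT.
set rho := (xi * cH + xis * sH) ^+ 2 + (xis * cH - xi * sH) ^+ 2.
set p := xi * cT + xis * sT.
set q := - (xi * sT) + xis * cT.
set c := cT * cH + sT * sH.
set s := sT * cH - cT * sH.
have eq1 : hk * (g1 ^+ 2 + g0 * g2) + w ^+ 2 * hk * f ^+ 2 =
    hk * w ^+ 2 * (2 * f ^+ 2 * s ^+ 2 - 2 * eps * f * (s * q + c * p)
       + eps ^+ 2 * (q ^+ 2 - p ^+ 2)).
  apply/eqP; rewrite -subr_eq0; apply/eqP.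
  have -> : hk * (g1 ^+ 2 + g0 * g2) + w ^+ 2 * hk * f ^+ 2 -
    hk * w ^+ 2 * (2 * f ^+ 2 * s ^+ 2 - 2 * eps * f * (s * q + c * p)
       + eps ^+ 2 * (q ^+ 2 - p ^+ 2)) =
    hk * w ^+ 2 * f ^+ 2 * (1 - (cT ^+ 2 + sT ^+ 2) * (cH ^+ 2 + sH ^+ 2)).
    rewrite /g0 /g1 /g2 /x /xs /p /q /c /s; ring.
  by rewrite eT eH mulr1 subrr mulr0.
have erho : rho = p ^+ 2 + q ^+ 2.
  have -> : rho = (xi ^+ 2 + xis ^+ 2) * (cH ^+ 2 + sH ^+ 2) by rewrite /rho; ring.
  have -> : p ^+ 2 + q ^+ 2 = (xi ^+ 2 + xis ^+ 2) * (cT ^+ 2 + sT ^+ 2) by rewrite /p /q; ring.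
  by rewrite eT eH.
have ecs : c ^+ 2 + s ^+ 2 = 1.
  have -> : c ^+ 2 + s ^+ 2 = (cT ^+ 2 + sT ^+ 2) * (cH ^+ 2 + sH ^+ 2) by rewrite /c /s; ring.
  by rewrite eT eH mulr1.
have rho0 : 0 <= rho by rewrite erho addr_ge0 // sqr_ge0.
have hsq : `|s * q + c * p| <= Num.sqrt rho.
  apply: abs_le_sq; first exact: sqrtr_ge0.
  rewrite sqr_sqrtr // erho.
  have -> : p ^+ 2 + q ^+ 2 = (c ^+ 2 + s ^+ 2) * (p ^+ 2 + q ^+ 2) by rewrite ecs mul1r.
  rewrite -subr_ge0.
  have -> : (c ^+ 2 + s ^+ 2) * (p ^+ 2 + q ^+ 2) - (s * q + c * p) ^+ 2 = (s * p - c * q) ^+ 2 by ring.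
  exact: sqr_ge0.
have hqp : `|q ^+ 2 - p ^+ 2| <= rho.
  rewrite erho; apply: (le_trans (ler_normB _ _)).
  by rewrite !ger0_norm ?sqr_ge0 // addrC.
rewrite eq1 normrM (ger0_norm (mulr_ge0 h0 (sqr_ge0 _))).
rewrite [hk * _]mulrC -[w ^+ 2 * hk * _]mulrA; apply: ler_wpM2l; first exact: sqr_ge0.
have hE : `|2 * f ^+ 2 * s ^+ 2 - 2 * eps * f * (s * q + c * p) + eps ^+ 2 * (q ^+ 2 - p ^+ 2)|
   <= 2 * f ^+ 2 * s ^+ 2 + 2 * eps * `|f| * Num.sqrt rho + eps ^+ 2 * rho.
  apply: (le_trans (ler_normD _ _)); apply: lerD.
    apply: (le_trans (ler_normB _ _)); apply: lerD.
      by rewrite ger0_norm // mulr_ge0 ?sqr_ge0 // mulr_ge0 ?sqr_ge0.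
    rewrite !normrM (ger0_norm e0) normr_nat ler_wpM2l //.
    by rewrite !mulr_ge0.
  by rewrite normrM ger0_norm ?sqr_ge0 // ler_wpM2l // sqr_ge0.
apply: (le_trans _ hE).
rewrite -[X in _ <= X]mul1r; apply: ler_wpM2r => //; exact: normr_ge0.
Qed.



Lemma abs_sin_pos (z : R) : 0 < z -> `|sin z| <= z.
Proof.
move=> z0.
have [c _ hc] := @MVT R sin cos 0 z z0 (fun x _ => is_derive_sin x)
  (continuous_subspaceT (@continuous_sin R)).
move: hc; rewrite sin0 !subr0 => ->.
rewrite normrM (gtr0_norm z0) -[X in _ <= X]mul1r; apply: ler_wpM2r; first exact: ltW.
exact: cos_max.
Qed.

Lemma abs_sin_le (z : R) : `|sin z| <= `|z|.
Proof.
case: (ltgtP z 0) => hz.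
- by rewrite -normrN -sinN (ltr0_norm hz); apply: abs_sin_pos; rewrite oppr_gt0.
- by rewrite (gtr0_norm hz); exact: abs_sin_pos.
- by rewrite hz sin0 normr0.
Qed.

Lemma CS_sum (F G : nat -> R) m n :
  (\sum_(m <= k < n) F k * G k) ^+ 2 <=
  (\sum_(m <= k < n) F k ^+ 2) * (\sum_(m <= k < n) G k ^+ 2).
Proof.
set A := \sum_(m <= k < n) F k ^+ 2.
set B := \sum_(m <= k < n) G k ^+ 2.
set C := \sum_(m <= k < n) F k * G k.
have quad : forall t, 0 <= A - 2 * t * C + t ^+ 2 * B.
  move=> t.
  have -> : A - 2 * t * C + t ^+ 2 * B = \sum_(m <= k < n) (F k - t * G k) ^+ 2.
    rewrite /A /B /C mulr_sumr mulr_sumr -sumrN -!big_split /=.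
    by apply: eq_bigr => k _; ring.
  by apply: sumr_ge0 => k _; exact: sqr_ge0.
have B0 : 0 <= B by apply: sumr_ge0 => k _; exact: sqr_ge0.
case: (eqVneq B 0) => hB.
  case: (eqVneq C 0) => hC; first by rewrite hC hB expr0n /= mulr0.
  have := quad ((A + 1) / (2 * C)).
  rewrite hB mulr0 addr0.
  have -> : 2 * ((A + 1) / (2 * C)) * C = A + 1 by field; rewrite hC.
  lra.
have Bp : 0 < B by rewrite lt_def hB B0.
have := quad (C / B).
have -> : A - 2 * (C / B) * C + (C / B) ^+ 2 * B = (A * B - C ^+ 2) / B.
  by field.
by rewrite pmulr_lge0 ?invr_gt0 // subr_ge0.
Qed.

Lemma bigmax_ub (F : nat -> R) m n k : (m <= k < n)%N ->
  F k <= \big[Num.max/0]_(m <= i < n) F i.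
Proof.
rewrite -mem_index_iota; elim: (index_iota m n) => [|a r IH] //.
rewrite inE big_cons le_max => /orP[/eqP -> | /IH ->]; first by rewrite lexx.
by rewrite orbT.
Qed.

Lemma bigmax_ge0 (F : nat -> R) m n : 0 <= \big[Num.max/0]_(m <= i < n) F i.
Proof.
elim: (index_iota m n) => [|a r IH]; first by rewrite big_nil.
by rewrite big_cons le_max IH orbT.
Qed.



Lemma L_gt0 (eps : R) : 0 < eps < 1 -> 0 < ln (eps ^- 5).
Proof.
move=> /andP[e0 e1]; apply: ln_gt0.
by rewrite invf_gt1 ?exprn_gt0 // exprn_ilt1 // ltW.
Qed.

Lemma epsN (eps beta : R) (N : nat) : 0 < eps < 1 -> 1 < beta ->
  (N%:Z = Num.floor ((eps ^+ 2 * ln (eps ^- 5)) `^ (- (2 * beta + 1)^-1)))%R ->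
  (1 <= N)%N ->
  eps ^+ 2 * ln (eps ^- 5) * N%:R `^ (2 * beta + 1) <= 1.
Proof.
move=> he hb hN hN1.
have L0 := @L_gt0 eps he.
move: he => /andP[e0 e1].
set z := eps ^+ 2 * ln (eps ^- 5).
have z0 : 0 < z by rewrite mulr_gt0 ?exprn_gt0.
set p := 2 * beta + 1.
have p0 : 0 < p by rewrite /p; lra.
set y := z `^ (- p^-1).
have Ny : N%:R <= y.
  have := floor_le y; rewrite -hN.
  by rewrite pmulrn.
have : N%:R `^ p <= y `^ p.
  apply: ge0_ler_powR => //; first exact: ltW.
  - by rewrite nnegrE.
  - by rewrite nnegrE powR_ge0.
have -> : y `^ p = z ^-1.
  rewrite /y -powRrM mulNr mulVf ?gt_eqF //; exact: powR_inv1 (ltW z0).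
move=> h; rewrite -[X in _ <= X](mulVf (lt0r_neq0 z0)) [z * _]mulrC.
by apply: ler_wpM2r; first exact: ltW.
Qed.



Lemma sob_partial (f : R -> R) (beta : R) (N : nat) :
  (sobnorm2 f beta < +oo)%E ->
  \sum_(1 <= k < N.+1) ((2 * pi * k%:R) `^ (2 * beta) * fcoef f k ^+ 2)
    <= sobnorm f beta ^+ 2.
Proof.
move=> hfin.
have h0 : (0 <= sobnorm2 f beta)%E.
  apply: nneseries_ge0 => n _ _; rewrite lee_fin mulr_ge0 ?powR_ge0 ?sqr_ge0 //.
have hle : ((\sum_(1 <= k < N.+1) ((2 * pi * k%:R) `^ (2 * beta) * fcoef f k ^+ 2))%:E
   <= sobnorm2 f beta)%E.
  rewrite -sumEFin; apply: nneseries_lim_ge => n _ _.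
  by rewrite lee_fin mulr_ge0 ?powR_ge0 ?sqr_ge0.
have hf : sobnorm2 f beta = (fine (sobnorm2 f beta))%:E.
  by rewrite fineK // ge0_fin_numE.
rewrite /sobnorm sqr_sqrtr; last by rewrite fine_ge0.
by move: hle; rewrite hf lee_fin.
Qed.



Lemma powRD_pos (a r s : R) : 0 < a -> a `^ (r + s) = a `^ r * a `^ s.
Proof. by move=> a0; rewrite powRD // (lt0r_neq0 a0) implybT. Qed.

Lemma abs_le_sq_aux (z r : R) : 0 <= r -> z ^+ 2 <= r ^+ 2 -> `|z| <= r.
Proof.
move=> r0 h; rewrite -(ger0_norm r0); rewrite -ler_sqr ?nnegrE //.
by rewrite !real_normK ?num_real.
Qed.

Lemma sq_le_abs (s z : R) : `|s| <= `|z| -> s ^+ 2 <= z ^+ 2.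
Proof.
move=> h; rewrite -(real_normK (num_real s)) -(real_normK (num_real z)) !expr2.
by apply: ler_pM.
Qed.

Lemma T1k (beta u s : R) (k N : nat) : 1 < beta -> (1 <= k <= N)%N ->
  4 * pi * `|u| <= N%:R^-1 -> `|s| <= `|2 * pi * k%:R * u| ->
  (2 * pi * k%:R) ^+ 2 * (2 * s ^+ 2) <=
  N%:R `^ (2 - 2 * Num.min beta (3/2)) * (2 * pi * k%:R) `^ (2 * beta).
Proof.
move=> hb /andP[hk1 hkN] hu hs.
set bh := Num.min beta (3/2).
have hbb : bh <= beta by rewrite ge_min lexx.
have hb32 : bh <= 3/2 by rewrite ge_min lexx orbT.
have pi2 := @pi_ge2 R.
set c := 2 * pi.
have c1 : 1 <= c by rewrite /c; lra.
set a := k%:R.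
have a1 : 1 <= a by rewrite /a ler1n.
set n := N%:R.
have aN : a <= n by rewrite /a /n ler_nat.
have n1 : 1 <= n by apply: le_trans aN.
have n0 : 0 < n by apply: lt_le_trans n1; exact: ltr01.
set M := n `^ (2 - 2 * bh).
have M0 : 0 <= M := powR_ge0 _ _.
have hs2 : s ^+ 2 <= (a / (2 * n)) ^+ 2.
  apply: sq_le_abs; apply: (le_trans hs).
  have hu' : `|u| <= (4 * pi * n)^-1.
    have p4 : 0 < 4 * pi :> R by lra.
    have -> : `|u| = (4 * pi)^-1 * (4 * pi * `|u|) by rewrite mulrA mulVf ?mul1r // lt0r_neq0.
    rewrite [X in _ <= X]invfM; apply: ler_wpM2l; [rewrite invr_ge0; exact: ltW | exact: hu].
  rewrite normrM [X in _ <= X]ger0_norm; last by rewrite divr_ge0 ?mulr_ge0 //; lra.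
  rewrite normrM (ger0_norm (_ : 0 <= c)); last by lra.
  rewrite (ger0_norm (_ : 0 <= a)); last by lra.
  have -> : a / (2 * n) = c * a * (4 * pi * n)^-1.
    rewrite /c; move: (@pi_gt0 R); generalize (@pi R) => P P0; field; apply/andP; split; exact: lt0r_neq0.
  apply: ler_wpM2l => //; rewrite mulr_ge0 //; lra.
have hL : (c * a) ^+ 2 * (2 * s ^+ 2) <= c ^+ 2 * a ^+ 4 / (2 * n ^+ 2).
  apply: le_trans (_ : (c * a) ^+ 2 * (2 * (a / (2 * n)) ^+ 2) <= _).
    apply: ler_wpM2l; first exact: sqr_ge0.
    by apply: ler_wpM2l.
  rewrite le_eqVlt; apply/orP; left; apply/eqP.
  by field; exact: lt0r_neq0.
have ca0 : 0 <= c := le_trans ler01 c1.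
have hcpow : c ^+ 2 <= c `^ (2 * beta).
  rewrite -powR_mulrn //; apply: ler_powR => //; lra.
have ha4 : a ^+ 4 <= n ^+ 2 * M * a `^ (2 * beta).
  have a0 : 0 < a by apply: lt_le_trans a1; exact: ltr01.
  rewrite -powR_mulrn; last exact: ltW.
  have -> : (4%:R : R) = (4 - 2 * bh) + 2 * bh by ring.
  rewrite powRD_pos // -powR_mulrn; last exact: ltW.
  have -> : n `^ 2%:R * M = n `^ (4 - 2 * bh).
    by rewrite /M -powRD_pos //; congr (_ `^ _); ring.
  apply: ler_pM; [exact: powR_ge0 | exact: powR_ge0 | | ].
    apply: ge0_ler_powR; rewrite ?nnegrE; [lra | exact: ltW | exact: ltW | exact: aN].
  apply: ler_powR => //; lra.
rewrite powRM; [| exact: ca0 | rewrite /a; exact: ler0n].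
apply: (le_trans hL).
have c20 : 0 < c ^+ 2 by rewrite exprn_gt0 //; lra.
have n20 : 0 < 2 * n ^+ 2 by rewrite mulr_gt0 ?exprn_gt0.
rewrite ler_pdivrMr //.
apply: le_trans (_ : c ^+ 2 * (n ^+ 2 * M * a `^ (2 * beta)) <= _).
  by apply: ler_wpM2l; [exact: ltW | exact: ha4].
have hp := powR_ge0 a (2 * beta).
have hq := powR_ge0 c (2 * beta).
have hn2 : 0 <= n ^+ 2 := sqr_ge0 n.
have -> : M * (c `^ (2 * beta) * a `^ (2 * beta)) * (2 * n ^+ 2)
   = (c `^ (2 * beta)) * (n ^+ 2 * M * a `^ (2 * beta)) * 2 by ring.
have hX : 0 <= n ^+ 2 * M * a `^ (2 * beta) by rewrite !mulr_ge0.
apply: le_trans (_ : c `^ (2 * beta) * (n ^+ 2 * M * a `^ (2 * beta)) <= _).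
  by apply: ler_wpM2r.
rewrite -[X in X <= _]mulr1; apply: ler_wpM2l; [rewrite mulr_ge0 // | lra].
Qed.


Lemma Gk (beta : R) (k N : nat) : 1 < beta -> (1 <= k <= N)%N ->
  (2 * pi * k%:R) `^ (4 - 2 * beta) <= (2 * pi) ^+ 2 * N%:R `^ (4 - 2 * Num.min beta (3/2)).
Proof.
move=> hb /andP[hk1 hkN].
set bh := Num.min beta (3/2).
have hbb : bh <= beta by rewrite ge_min lexx.
have hb32 : bh <= 3/2 by rewrite ge_min lexx orbT.
have pi2 := @pi_ge2 R.
have c1 : 1 <= 2 * pi :> R by lra.
have a1 : 1 <= k%:R :> R by rewrite ler1n.
have aN : k%:R <= N%:R :> R by rewrite ler_nat.
rewrite powRM; [| lra | exact: ler0n].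
apply: ler_pM; [exact: powR_ge0 | exact: powR_ge0 | |].
  rewrite -powR_mulrn; last by lra.
  apply: ler_powR => //; lra.
apply: le_trans (_ : k%:R `^ (4 - 2 * bh) <= _).
  apply: ler_powR => //; lra.
apply: ge0_ler_powR; rewrite ?nnegrE ?ler0n //; lra.
Qed.

Lemma epsbounds (eps L beta : R) (N : nat) : 0 < L -> 1 < beta -> (1 <= N)%N ->
  eps ^+ 2 * L * N%:R `^ (2 * beta + 1) <= 1 ->
  eps ^+ 2 * L * N%:R ^+ 3 <= N%:R `^ (2 - 2 * Num.min beta (3/2)) /\
  eps ^+ 2 * L * (N%:R * N%:R `^ (4 - 2 * Num.min beta (3/2)))
     <= (N%:R `^ (2 - 2 * Num.min beta (3/2))) ^+ 2.
Proof.
move=> L0 hb hN hK.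
set bh := Num.min beta (3/2).
have hbb : bh <= beta by rewrite ge_min lexx.
have n1 : 1 <= N%:R :> R by rewrite ler1n.
have n0 : 0 < N%:R :> R by apply: lt_le_trans n1; exact: ltr01.
have e0 : 0 <= eps ^+ 2 * L by rewrite mulr_ge0 ?sqr_ge0 // ltW.
split.
  rewrite -[N%:R ^+ 3]powR_mulrn; last exact: ltW.
  have -> : (3%:R : R) = (2 * beta + 1) + (2 - 2 * beta) by ring.
  rewrite powRD_pos // mulrA.
  apply: le_trans (_ : 1 * N%:R `^ (2 - 2 * beta) <= _).
    by apply: ler_wpM2r; [exact: powR_ge0 | exact: hK].
  rewrite mul1r; apply: ler_powR => //; lra.
rewrite -[(N%:R `^ _) ^+ 2]powR_mulrn ?powR_ge0 // -powRrM.
have -> : N%:R * N%:R `^ (4 - 2 * bh) = N%:R `^ (2 * beta + 1) * N%:R `^ (4 - 2 * beta - 2 * bh).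
  rewrite -powRD_pos // -{1}(powRr1 (ltW n0)) -powRD_pos //; congr (_ `^ _); ring.
rewrite mulrA.
apply: le_trans (_ : 1 * N%:R `^ (4 - 2 * beta - 2 * bh) <= _).
  by apply: ler_wpM2r; [exact: powR_ge0 | exact: hK].
rewrite mul1r; apply: ler_powR => //; lra.
Qed.


Lemma final_ineq (M A S C G W X eps L : R) :
  0 <= M -> 0 <= A -> A <= S ^+ 2 -> 0 <= S -> 0 <= X -> 0 <= eps -> 0 < L ->
  0 <= C -> 0 <= G -> C ^+ 2 <= A * G ->
  eps ^+ 2 * L * G <= (2 * pi) ^+ 2 * M ^+ 2 ->
  eps ^+ 2 * L * W <= (2 * pi) ^+ 2 * M ->
  M * A + 2 * eps * X * C + eps ^+ 2 * X ^+ 2 * W <=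
  M * (S + 2 * pi * X / Num.sqrt L) ^+ 2.
Proof.
move=> M0 A0 AS S0 X0 e0 L0 C0 G0 CS hG hW.
have sL : 0 < Num.sqrt L by rewrite sqrtr_gt0.
set D := 2 * pi * X / Num.sqrt L.
have pi0 := @pi_gt0 R.
have D0 : 0 <= D.
  by rewrite /D; apply: divr_ge0; [apply: mulr_ge0 => //; lra | exact: ltW].
have D2 : D ^+ 2 * L = (2 * pi) ^+ 2 * X ^+ 2.
  rewrite /D expr_div_n sqr_sqrtr ?(ltW L0) //; field; exact: lt0r_neq0.
have h1 : M * A <= M * S ^+ 2 by apply: ler_wpM2l.
have h3 : eps ^+ 2 * X ^+ 2 * W <= M * D ^+ 2.
  rewrite -(ler_pM2r L0) -[M * D ^+ 2 * L]mulrA D2.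
  have -> : eps ^+ 2 * X ^+ 2 * W * L = X ^+ 2 * (eps ^+ 2 * L * W) by ring.
  have -> : M * ((2 * pi) ^+ 2 * X ^+ 2) = X ^+ 2 * ((2 * pi) ^+ 2 * M) by ring.
  by apply: ler_wpM2l; [exact: sqr_ge0 | exact: hW].
have h2 : eps * X * C <= M * S * D.
  apply: le_trans (ler_norm (eps * X * C)) _; apply: abs_le_sq_aux.
    by apply: mulr_ge0 => //; apply: mulr_ge0.
  have hA : (eps * X * C) ^+ 2 <= eps ^+ 2 * X ^+ 2 * (S ^+ 2 * G).
    rewrite !exprMn; apply: ler_wpM2l; first by rewrite mulr_ge0 ?sqr_ge0.
    apply: le_trans CS _; exact: ler_wpM2r.
  apply: le_trans hA _.
  rewrite -(ler_pM2r L0).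
  have -> : eps ^+ 2 * X ^+ 2 * (S ^+ 2 * G) * L = X ^+ 2 * S ^+ 2 * (eps ^+ 2 * L * G) by ring.
  have -> : (M * S * D) ^+ 2 * L = X ^+ 2 * S ^+ 2 * ((2 * pi) ^+ 2 * M ^+ 2).
    by rewrite (_ : (M * S * D) ^+ 2 * L = (M * S) ^+ 2 * (D ^+ 2 * L)); [rewrite D2; ring | ring].
  by apply: ler_wpM2l; [rewrite mulr_ge0 ?sqr_ge0 | exact: hG].
have -> : M * (S + D) ^+ 2 = M * S ^+ 2 + 2 * (M * S * D) + M * D ^+ 2 by ring.
have -> : 2 * eps * X * C = 2 * (eps * X * C) by ring.
apply: lerD; [apply: lerD | exact: h3]; first exact: h1.
by apply: ler_wpM2l.
Qed.

End S.

Theorem lemma1 (R : realType) (f : R -> R) (theta beta eps : R) (N : nat)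
    (xi xis : nat -> R) (h : nat -> R) :
  admissible_f f ->
  1 < beta ->
  (sobnorm2 f beta < +oo)%E ->
  0 < eps < 1 ->
  (N%:Z = Num.floor ((eps ^+ 2 * ln (eps ^- 5)) `^ (- (2 * beta + 1)^-1)))%R ->
  (1 <= N)%N ->
  (forall k, (1 <= k <= N)%N -> 0 <= h k <= 1) ->
  let bh := Num.min beta (3 / 2) in
  let x := obs_x f theta eps xi in
  let xs := obs_xs f theta eps xis in
  forall tau : R, 4 * pi * `|tau - theta| <= N%:R^-1 ->
  `| Phi'' N x xs h tau + \sum_(1 <= k < N.+1) (2 * pi * k%:R) ^+ 2 * h k * fcoef f k ^+ 2 |
    <= N%:R `^ (2 - 2 * bh) *
       (sobnorm f beta + 2 * pi * Xhat N xi xis theta / Num.sqrt (ln (eps ^- 5))) ^+ 2.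
Proof.
move=> _ hb hfin he hN hN1 hh bh x xs tau htau.
rewrite Phi''E -big_split /=.
set X := Xhat N xi xis theta.
set S := sobnorm f beta.
set L := ln (eps ^- 5).
set M := N%:R `^ (2 - 2 * bh).
have L0 : 0 < L := @L_gt0 R eps he.
have e0 : 0 <= eps by case/andP: he => /ltW.
have X0 : 0 <= X := bigmax_ge0 _ _ _ _.
have M0 : 0 <= M := powR_ge0 _ _.
apply: le_trans (ler_norm_sum _ _ _) _.
apply: le_trans (_ : \sum_(1 <= k < N.+1)
   (M * ((2 * pi * k%:R) `^ (2 * beta) * fcoef f k ^+ 2)
    + 2 * eps * X * ((2 * pi * k%:R) ^+ 2 * `|fcoef f k|)
    + eps ^+ 2 * X ^+ 2 * (2 * pi * k%:R) ^+ 2) <= _).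
  apply: ler_sum_nat => k hk.
  have hk' : (1 <= k <= N)%N by rewrite -ltnS.
  have K := @key_k R (fcoef f k) eps (xi k) (xis k) (h k) (2 * pi * k%:R)
    (cos (2 * pi * k%:R * tau)) (sin (2 * pi * k%:R * tau))
    (cos (2 * pi * k%:R * theta)) (sin (2 * pi * k%:R * theta))
    (cos2Dsin2 _) (cos2Dsin2 _) (hh k hk') e0.
  cbv zeta in K.
  apply: le_trans K _.
  set w := 2 * pi * k%:R.
  set fk := fcoef f k.
  set sn := sin (w * tau) * cos (w * theta) - cos (w * tau) * sin (w * theta).
  set rho := (xi k * cos (w * theta) + xis k * sin (w * theta)) ^+ 2 +
      (xis k * cos (w * theta) - xi k * sin (w * theta)) ^+ 2.
  have rho0 : 0 <= rho by rewrite addr_ge0 ?sqr_ge0.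
  have hr : Num.sqrt rho <= X.
    exact: (@bigmax_ub R (fun k => Num.sqrt (xi_th xi xis theta k ^+ 2 + xis_th xi xis theta k ^+ 2)) 1 N.+1 k hk).
  have hsn : `|sn| <= `|w * (tau - theta)|.
    rewrite /sn -sinB -mulrBr; exact: abs_sin_le.
  have T1 := @T1k R beta (tau - theta) sn k N hb hk' htau hsn.
  rewrite mulrDr mulrDr; apply: lerD; [apply: lerD|].
  - have -> : w ^+ 2 * (2 * fk ^+ 2 * sn ^+ 2) = fk ^+ 2 * (w ^+ 2 * (2 * sn ^+ 2)) by ring.
    have -> : M * (w `^ (2 * beta) * fk ^+ 2) = fk ^+ 2 * (M * w `^ (2 * beta)) by ring.
    by apply: ler_wpM2l; [exact: sqr_ge0 | exact: T1].
  - have -> : w ^+ 2 * (2 * eps * `|fk| * Num.sqrt rho) = (2 * eps * (w ^+ 2 * `|fk|)) * Num.sqrt rho by ring.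
    have -> : 2 * eps * X * (w ^+ 2 * `|fk|) = (2 * eps * (w ^+ 2 * `|fk|)) * X by ring.
    apply: ler_wpM2l; last exact: hr.
    apply: mulr_ge0; [apply: mulr_ge0 => // | apply: mulr_ge0; [exact: sqr_ge0 | exact: normr_ge0]].
  - have -> : w ^+ 2 * (eps ^+ 2 * rho) = (eps ^+ 2 * w ^+ 2) * Num.sqrt rho ^+ 2.
      by rewrite sqr_sqrtr //; ring.
    have -> : eps ^+ 2 * X ^+ 2 * w ^+ 2 = (eps ^+ 2 * w ^+ 2) * X ^+ 2 by ring.
    apply: ler_wpM2l; first by rewrite mulr_ge0 ?sqr_ge0.
    by apply: ler_pM => //; exact: sqrtr_ge0.
rewrite big_split big_split /= -!mulr_sumr.
set A := \sum_(1 <= k < N.+1) (2 * pi * k%:R) `^ (2 * beta) * fcoef f k ^+ 2.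
set C := \sum_(1 <= k < N.+1) (2 * pi * k%:R) ^+ 2 * `|fcoef f k|.
set W := \sum_(1 <= k < N.+1) (2 * pi * k%:R) ^+ 2.
set G := \sum_(1 <= k < N.+1) (2 * pi * k%:R) `^ (4 - 2 * beta).
have pi0 := @pi_gt0 R.
have wpos : forall k, (1 <= k < N.+1)%N -> 0 < 2 * pi * k%:R :> R.
  move=> k /andP[k1 _]; rewrite mulr_gt0 ?ltr0n //; lra.
have A0 : 0 <= A by apply: sumr_ge0 => k _; rewrite mulr_ge0 ?powR_ge0 ?sqr_ge0.
have C0 : 0 <= C by apply: sumr_ge0 => k _; rewrite mulr_ge0 ?sqr_ge0.
have G0 : 0 <= G by apply: sumr_ge0 => k _; exact: powR_ge0.
have AS : A <= S ^+ 2 := @sob_partial R f beta N hfin.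
have S0 : 0 <= S := sqrtr_ge0 _.
have hK := @epsN R eps beta N he hb hN hN1.
have [hb1 hb2] := @epsbounds R eps L beta N L0 hb hN1 hK.
have CSi : C ^+ 2 <= A * G.
  have := @CS_sum R (fun k => (2 * pi * k%:R) `^ beta * `|fcoef f k|)
                 (fun k => (2 * pi * k%:R) `^ (2 - beta)) 1 N.+1.
  have -> : \sum_(1 <= k < N.+1) (2 * pi * k%:R) `^ beta * `|fcoef f k| * (2 * pi * k%:R) `^ (2 - beta) = C.
    apply: eq_big_nat => k hk.
    rewrite mulrAC -powRD_pos ?wpos // (_ : beta + (2 - beta) = 2%:R); last by ring.
    by rewrite powR_mulrn // ltW // wpos.
  have -> : \sum_(1 <= k < N.+1) ((2 * pi * k%:R) `^ beta * `|fcoef f k|) ^+ 2 = A.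
    apply: eq_big_nat => k hk.
    rewrite exprMn real_normK ?num_real //; congr (_ * _).
    by rewrite -powR_mulrn ?powR_ge0 // -powRrM (mulrC beta).
  have -> : \sum_(1 <= k < N.+1) ((2 * pi * k%:R) `^ (2 - beta)) ^+ 2 = G.
    apply: eq_big_nat => k hk.
    rewrite -powR_mulrn ?powR_ge0 // -powRrM; congr (_ `^ _); ring.
  by [].
apply: (@final_ineq R M A S C G W X eps L) => //.
- have hGb : G <= (2 * pi) ^+ 2 * (N%:R * N%:R `^ (4 - 2 * bh)).
    apply: le_trans (_ : \sum_(1 <= k < N.+1) (2 * pi) ^+ 2 * N%:R `^ (4 - 2 * bh) <= _).
      apply: ler_sum_nat => k hk; apply: Gk => //; by rewrite -ltnS.
    by rewrite sumr_const_nat subn1 /= -mulr_natr le_eqVlt; apply/orP; left; apply/eqP; ring.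
  apply: le_trans (_ : eps ^+ 2 * L * ((2 * pi) ^+ 2 * (N%:R * N%:R `^ (4 - 2 * bh))) <= _).
    by apply: ler_wpM2l; [rewrite mulr_ge0 ?sqr_ge0 // ltW | exact: hGb].
  rewrite mulrCA; apply: ler_wpM2l; [exact: sqr_ge0 | exact: hb2].
- have hWb : W <= (2 * pi) ^+ 2 * N%:R ^+ 3.
    apply: le_trans (_ : \sum_(1 <= k < N.+1) (2 * pi) ^+ 2 * N%:R ^+ 2 <= _).
      apply: ler_sum_nat => k /andP[k1 kN].
      rewrite -exprMn !expr2.
      have h1 : 0 <= 2 * pi * k%:R :> R by rewrite mulr_ge0 ?ler0n //; lra.
      have h2 : 2 * pi * k%:R <= 2 * pi * N%:R :> R.
        by apply: ler_wpM2l; [lra | rewrite ler_nat -ltnS].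
      by apply: ler_pM.
    by rewrite sumr_const_nat subn1 /= -[_ *+ N]mulr_natr le_eqVlt; apply/orP; left; apply/eqP; ring.
  apply: le_trans (_ : eps ^+ 2 * L * ((2 * pi) ^+ 2 * N%:R ^+ 3) <= _).
    by apply: ler_wpM2l; [rewrite mulr_ge0 ?sqr_ge0 // ltW | exact: hWb].
  rewrite mulrCA; apply: ler_wpM2l; [exact: sqr_ge0 | exact: hb1].
Qed.
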